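(* Let $u\neq v\in V$ and let $\pi_{u,v}$ be the total causal effect of $Y_v$ on $Y_u$ in a linear structural equation model with DAG $G$. Let $\alpha\in(0,1)$ and suppose the data-dependent set of permutations $\hat\Theta(\mathbf Y,\alpha/2)$ satisfies, for every causal ordering $\theta\in\Theta(G)$, $\lim_{n\to\infty}P\big(\theta\in\hat\Theta(\mathbf Y,\alpha/2)\big)\ge 1-\alpha/2$. Suppose that for every $S\subseteq V\setminus\{u,v\}$, $C(S)$ is a data-dependent confidence interval for the coefficient of $Y_v$ in the regression of $Y_u$ onto $Y_{S\cup\{v\}}$ such that, whenever $S$ is a valid adjustment set for the effect of $v$ on $u$, $\lim_{n\to\infty}P(\pi_{u,v}\in C(S))\ge 1-\alpha/2$. Define $\mathcal S=\{\mathrm{pr}_\theta(v):\theta\in\hat\Theta(\mathbf Y,\alpha/2),\ \theta(v)<\theta(u)\}$ and let $\hat C_\alpha=\{0\}\cup\bigcup_{S\in\mathcal S}C(S)$ if $\theta(u)<\theta(v)$ for some $\theta\in\hat\Theta(\mathbf Y,\alpha/2)$, and $\hat C_\alpha=\bigcup_{S\in\mathcal S}C(S)$ otherwise. Then $\lim_{n\to\infty}P(\pi_{u,v}\in\hat C_\alpha)\ge 1-\alpha$.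
   Context: $V=[p]$ and $G=(V,E)$ is a directed acyclic graph; $\mathrm{pa}(v)$, $\mathrm{an}(v)$ denote the parents and ancestors of $v$. The random vector $Y=(Y_1,\dots,Y_p)$ follows a linear structural equation model $Y_v=\sum_{w\in\mathrm{pa}(v)}\beta_{v,w}Y_w+\varepsilon_v$ with mutually independent mean-zero errors; writing $B_{v,w}=\beta_{v,w}$ if $w\in\mathrm{pa}(v)$ and $0$ otherwise, $Y=BY+\varepsilon$, and the total causal effect of $v$ on $u$ is $\pi_{u,v}=\partial E[Y_u\mid\mathrm{do}(Y_v=y)]/\partial y=((I-B)^{-1})_{u,v}$ (in particular $\pi_{u,v}=0$ if $v\notin\mathrm{an}(u)$). A causal ordering of $G$ is a permutation $\theta$ of $V$ such that $\theta(w)<\theta(z)$ only if $z\notin\mathrm{an}(w)$; $\Theta(G)$ is the set of causal orderings, and $\mathrm{pr}_\theta(v)=\{w:\theta(w)<\theta(v)\}$. $\mathbf Y$ denotes a sample of $n$ i.i.d. copies of $Y$, and $\hat\Theta(\mathbf Y,\alpha/2)$ is any set of permutations computed from $\mathbf Y$. A set $S\subseteq V\setminus\{v\}$ is a valid adjustment set for the effect of $v$ on $u$ if the coefficient of $Y_v$ in the population least-squares regression of $Y_u$ on $Y_{S\cup\{v\}}$ equals $\pi_{u,v}$. *)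

(* Defs.v *)
From HB Require Import structures.
From mathcomp Require Import all_boot all_order all_algebra all_fingroup.
From mathcomp Require Import all_classical all_reals all_analysis.
Set Implicit Arguments. Unset Strict Implicit. Unset Printing Implicit Defensive.
Import Order.TTheory GRing.Theory Num.Theory.
Local Open Scope classical_set_scope.
Local Open Scope ring_scope.

(* The DAG G = (V, E) with V = 'I_p is given by an edge relation
   [E : rel 'I_p], [E w v] meaning the edge w -> v (w is a parent of v). *)

Definition ancestor (p : nat) (E : rel 'I_p) (z w : 'I_p) : bool := connect E z w.

Definition acyclic (p : nat) (E : rel 'I_p) : Prop :=
  forall w z, E w z -> ~~ connect E z w.

Definition causal_ordering (p : nat) (E : rel 'I_p) (theta : {perm 'I_p}) : Prop :=
  forall w z : 'I_p, (theta w < theta z)%N -> ~~ ancestor E z w.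

Definition pr (p : nat) (theta : {perm 'I_p}) (v : 'I_p) : {set 'I_p} :=
  [set w | (theta w < theta v)%N].

Definition total_effect (R : fieldType) (p : nat) (B : 'M[R]_p) (u v : 'I_p) : R :=
  invmx (1%:M - B) u v.

(* population covariance of Y = (I - B)^{-1} eps, with independent mean-zero
   errors of variances dvar:  Sigma = (I-B)^{-1} diag(dvar) (I-B)^{-T} *)
Definition sem_cov (R : fieldType) (p : nat) (B : 'M[R]_p) (dvar : 'I_p -> R)
  : 'M[R]_p :=
  invmx (1%:M - B) *m diag_mx (\row_j dvar j) *m (invmx (1%:M - B))^T.

(* population mean squared error E[(Y_u - sum_w c_w Y_w)^2] of the linear
   predictor with coefficient vector c, written through the covariance. *)
Definition pop_mse (R : fieldType) (p : nat) (Sigma : 'M[R]_p) (u : 'I_p)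
  (c : 'I_p -> R) : R :=
  \sum_(i < p) \sum_(j < p)
     ((i == u)%:R - c i) * Sigma i j * ((j == u)%:R - c j).

Definition pop_ls (R : realFieldType) (p : nat) (Sigma : 'M[R]_p) (u : 'I_p)
  (T : {set 'I_p}) (b : 'I_p -> R) : Prop :=
  (forall w, w \notin T -> b w = 0) /\
  (forall c : 'I_p -> R, (forall w, w \notin T -> c w = 0) ->
     pop_mse Sigma u b <= pop_mse Sigma u c).

Definition valid_adjustment (R : realFieldType) (p : nat) (B : 'M[R]_p)
  (dvar : 'I_p -> R) (u v : 'I_p) (S : {set 'I_p}) : Prop :=
  v \notin S /\
  forall b, pop_ls (sem_cov B dvar) u (v |: S) b -> b v = total_effect B u v.

Definition mutually_independent d (Omega : measurableType d) (R : realType)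
  (P : probability Omega R) (I : eqType) (X : I -> Omega -> R) : Prop :=
  (forall i, measurable_fun setT (X i)) /\
  forall (J : seq I) (A : I -> set R), uniq J -> (forall i, measurable (A i)) ->
    P (\big[setI/setT]_(i <- J) (X i @^-1` A i)) =
    (\prod_(i <- J) P (X i @^-1` A i))%E.

(* Main.v *)
Require Import Defs.
From HB Require Import structures.
From mathcomp Require Import all_boot all_order all_algebra all_fingroup.
From mathcomp Require Import all_classical all_reals all_analysis.
From mathcomp Require Import zify ring lra.
Import Order.TTheory GRing.Theory Num.Theory.
Local Open Scope ring_scope.

Section Liminf.
Local Open Scope classical_set_scope.
Local Open Scope ereal_scope.
Lemma einfs01 (R : realType) (a : (\bar R)^nat) n :
  (forall n, 0 <= a n <= 1) -> 0 <= einfs a n <= 1.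
Proof.
move=> H; apply/andP; split.
  by apply: le_ereal_inf_tmp => _ [k /= nk <-]; case/andP: (H k).
apply: le_trans (_ : a n <= 1); last by case/andP: (H n).
by apply: ereal_inf_lbound; exists n => /=.
Qed.

Arguments einfs01 {R a} n.

Lemma liminf_super {R : realType} (a b c : (\bar R)^nat) :
  (forall n, 0 <= a n <= 1) -> (forall n, 0 <= b n <= 1) -> (forall n, 0 <= c n <= 1) ->
  (forall n, a n + b n <= 1 + c n) ->
  limn_einf a + limn_einf b <= 1 + limn_einf c.
Proof.
move=> Ha Hb Hc H; rewrite !limn_einf_lim.
have fin (u : (\bar R)^nat) n : (forall n, 0 <= u n <= 1) -> einfs u n \is a fin_num.
  move=> Hu; case/andP: (einfs01 n Hu) => h0 h1.
  by rewrite ge0_fin_numE // (le_lt_trans h1) // ltey.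
have key n : einfs a n + einfs b n <= 1 + einfs c n.
  rewrite [X in _ <= X]addeC -leeBlDr //; rewrite /einfs /=.
  apply: le_ereal_inf_tmp => _ [k /= nk <-].
  have -> : (-1)%:E = - (1%:E : \bar R) by [].
  rewrite leeBlDr // [X in _ <= X]addeC; apply: le_trans (H k); apply: leeD;
    by apply: ereal_inf_lbound; exists k.
have l01 (u : (\bar R)^nat) : (forall n, 0 <= u n <= 1) -> 0 <= limn (einfs u).
  move=> Hu; rewrite -(lim_cst (@ereal_hausdorff R) (F := \oo) (0 : \bar R)).
  apply: lee_lim; [exact: is_cvg_cst| exact: is_cvg_einfs|].
  by apply: nearW => n; case/andP: (einfs01 n Hu).
rewrite -limeD; [|exact: is_cvg_einfs|exact: is_cvg_einfs|].
  rewrite -[X in X + _](lim_cst (@ereal_hausdorff R) (F := \oo) (1 : \bar R)) -limeD.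
  - apply: lee_lim; [|apply: is_cvgeD|exact: nearW].
    + apply: is_cvgeD; [|exact: is_cvg_einfs|exact: is_cvg_einfs].
      by rewrite ge0_adde_def // inE; apply: l01.
    + by rewrite lim_cst// ge0_adde_def // inE ?l01.
    + exact: is_cvg_cst.
    + exact: is_cvg_einfs.
  - exact: is_cvg_cst.
  - exact: is_cvg_einfs.
  - by rewrite lim_cst// ge0_adde_def // inE ?l01.
by rewrite ge0_adde_def // inE; apply: l01.
Qed.

Lemma le_liminf {R : realType} (a c : (\bar R)^nat) :
  (forall n, a n <= c n) -> limn_einf a <= limn_einf c.
Proof.
move=> H; rewrite !limn_einf_lim; apply: lee_lim; [exact: is_cvg_einfs|exact: is_cvg_einfs|].
apply: nearW => n; rewrite /einfs /=; apply: le_ereal_inf_tmp => _ [k /= nk <-].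
by apply: le_trans (H k); apply: ereal_inf_lbound; exists k.
Qed.
End Liminf.

Lemma connect_first {T : finType} (E : rel T) z w : connect E z w -> z != w ->
  exists2 z', E z z' & connect E z' w.
Proof.
case/connectP => -[|z' s] /= pth ->; first by rewrite eqxx.
move=> _; case/andP: pth => e pth; exists z' => //.
by apply/connectP; exists s.
Qed.

Lemma exists_causal {p : nat} {E : rel 'I_p} : acyclic E ->
  exists theta : {perm 'I_p}, causal_ordering E theta.
Proof.
move=> acE.
pose k (w : 'I_p) := #|[set z | connect E z w]|.
pose f (w : 'I_p) := (k w * p + w)%N.
have flt w : (#|[set y | (f y < f w)%N]| < p)%N.
  have : [set y | (f y < f w)%N] \proper [set: 'I_p].
    rewrite finset.properT; apply/eqP => e.
    by have := finset.in_setT w; rewrite -e finset.inE ltnn.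
  by move/proper_card; rewrite finset.cardsT card_ord.
pose g (w : 'I_p) : 'I_p := Ordinal (flt w).
have mono z w : (f z < f w)%N -> (g z < g w)%N.
  move=> lt; rewrite /g /=; apply: proper_card; apply/properP; split.
    apply/fintype.subsetP => y; rewrite !finset.inE => h; exact: ltn_trans h lt.
  by exists z; rewrite !finset.inE ?ltnn.
have finj : injective f.
  move=> z w e; apply: val_inj.
  have := congr1 (modn^~ p) e; rewrite /f !modnMDl !modn_small //.
have ginj : injective g.
  move=> z w e; case: (ltngtP (f z) (f w)) => h.
  - by have := mono _ _ h; rewrite e ltnn.
  - by have := mono _ _ h; rewrite e ltnn.
  - exact: finj.
exists (perm ginj) => w z; rewrite !permE => lt; apply/negP => czw.
have zw : z != w by apply: contraTneq lt => ->; rewrite ltnn.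
suff : (f z < f w)%N by move/mono; rewrite ltnNge => /negP; apply; exact: ltnW.
have kz : (k z < k w)%N.
  apply: proper_card; apply/properP; split.
    apply/fintype.subsetP => y; rewrite !finset.inE => h; exact: connect_trans h czw.
  exists w; rewrite !finset.inE ?connect0 //.
  apply/negP => cwz; have [z' ez' cz'w] := @connect_first _ E z w czw zw.
  by move: (acE _ _ ez'); rewrite (connect_trans cz'w cwz).
rewrite /f; have := ltn_ord z; have := ltn_ord w; nia.
Qed.

Lemma B_lt {R : fieldType} {p : nat} {E : rel 'I_p} {B : 'M[R]_p} {theta : {perm 'I_p}} :
  acyclic E -> (forall v' w, ~~ E w v' -> B v' w = 0) -> causal_ordering E theta ->
  forall i j, B i j != 0 -> E j i /\ (theta j < theta i)%N.
Proof.
move=> acE Bs cth i j nz.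
case eji: (E j i); last by move: nz; rewrite Bs ?eji // eqxx.
split => //; case: (ltngtP (theta j) (theta i)) => // h.
  by move: (cth i j h); rewrite /ancestor (connect1 eji).
move/val_inj/perm_inj: h => h; subst j.
by move: (acE _ _ eji); rewrite connect0.
Qed.

Lemma unit_IB {R : fieldType} {p : nat} {E : rel 'I_p} {B : 'M[R]_p} {theta : {perm 'I_p}} :
  acyclic E -> (forall v' w, ~~ E w v' -> B v' w = 0) -> causal_ordering E theta ->
  (1%:M - B) \in unitmx.
Proof.
move=> acE Bs cth; rewrite unitmxE unitfE; apply/negP => /det0P [x xn0 hx].
move/eqP: xn0; apply; apply/rowP => k; rewrite mxE.
have hk k' : x 0 k' = \sum_i x 0 i * B i k'.
  move: hx; rewrite mulmxBr mulmx1 => /eqP; rewrite subr_eq0 => /eqP hx.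
  by rewrite {1}hx mxE.
have ind m : forall k', (p - theta k' <= m)%N -> x 0 k' = 0.
  elim: m => [|m IH] k' hk'.
    by have := ltn_ord (theta k'); lia.
  rewrite hk big1 // => i _.
  have [->|nz] := eqVneq (B i k') 0; first by rewrite mulr0.
  have [_ lt] := B_lt acE Bs cth _ _ nz.
  by rewrite IH ?mul0r //; have := ltn_ord (theta i); lia.
exact: (ind p k (leq_subr _ _)).
Qed.

Lemma M_eq {R : fieldType} {p : nat} {E : rel 'I_p} {B : 'M[R]_p} {theta : {perm 'I_p}} :
  acyclic E -> (forall v' w, ~~ E w v' -> B v' w = 0) -> causal_ordering E theta ->
  forall i k, invmx (1%:M - B) i k = (i == k)%:R + \sum_l B i l * invmx (1%:M - B) l k.
Proof.
move=> acE Bs cth i k.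
have h := mulmxV (unit_IB acE Bs cth); rewrite mulmxBl mul1mx in h.
have e : invmx (1%:M - B) = 1%:M + B *m invmx (1%:M - B) by rewrite -[in X in _ = X + _]h subrK.
by rewrite {1}e !mxE.
Qed.

Lemma M_supp {R : fieldType} {p : nat} {E : rel 'I_p} {B : 'M[R]_p} {theta : {perm 'I_p}} :
  acyclic E -> (forall v' w, ~~ E w v' -> B v' w = 0) -> causal_ordering E theta ->
  forall i k, invmx (1%:M - B) i k != 0 -> connect E k i.
Proof.
move=> acE Bs cth.
suff ind m : forall i k, (theta i <= m)%N -> invmx (1%:M - B) i k != 0 -> connect E k i.
  by move=> i k; apply: (ind p); have := ltn_ord (theta i); lia.
elim: m => [|m IH] i k hi nz.
  case: (eqVneq i k) => [->|ik]; first exact: connect0.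
  move: nz; rewrite (M_eq acE Bs cth) (negbTE ik) add0r big1 ?eqxx // => l _.
  have [->|nz] := eqVneq (B i l) 0; first by rewrite mul0r.
  by have [_ lt] := B_lt acE Bs cth _ _ nz; lia.
case: (eqVneq i k) => [->|ik]; first exact: connect0.
move: nz; rewrite (M_eq acE Bs cth) (negbTE ik) add0r.
case: (pickP (fun l => B i l * invmx (1%:M - B) l k != 0)) => [l nzl|none].
  move: nzl; rewrite mulf_eq0 negb_or => /andP[b1 b2] _.
  have [eli lt] := B_lt acE Bs cth _ _ b1.
  apply: connect_trans (IH l k _ b2) (connect1 eli); lia.
by rewrite big1 ?eqxx // => l _; apply/eqP; move: (none l) => /negbFE.
Qed.

Lemma M_diag {R : fieldType} {p : nat} {E : rel 'I_p} {B : 'M[R]_p} {theta : {perm 'I_p}} :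
  acyclic E -> (forall v' w, ~~ E w v' -> B v' w = 0) -> causal_ordering E theta ->
  forall v, invmx (1%:M - B) v v = 1.
Proof.
move=> acE Bs cth v; rewrite (M_eq acE Bs cth) eqxx big1 ?addr0 // => l _.
have [->|nz] := eqVneq (B v l) 0; first by rewrite mul0r.
have [elv _] := B_lt acE Bs cth _ _ nz.
have [->|nz2] := eqVneq (invmx (1%:M - B) l v) 0; first by rewrite mulr0.
by move: (acE _ _ elv); rewrite (M_supp acE Bs cth _ _ nz2).
Qed.

Lemma LA_zero {R : realFieldType} {p : nat} {E : rel 'I_p} {B : 'M[R]_p} {theta : {perm 'I_p}} :
  acyclic E -> (forall v' w, ~~ E w v' -> B v' w = 0) -> causal_ordering E theta ->
  forall u v, ~~ connect E v u -> total_effect B u v = 0.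
Proof.
move=> acE Bs cth u v H; rewrite /total_effect; apply/eqP.
by apply: contraNT H => nz; exact: (M_supp acE Bs cth _ _ nz).
Qed.

Lemma mse_eq {R : fieldType} {p : nat} (B : 'M[R]_p) (dvar : 'I_p -> R) u (c : 'I_p -> R) :
  pop_mse (sem_cov B dvar) u c =
  \sum_k dvar k * (\sum_i ((i == u)%:R - c i) * invmx (1%:M - B) i k) ^+ 2.
Proof.
set M := invmx (1%:M - B).
have e i j : sem_cov B dvar i j = \sum_k M i k * dvar k * M j k.
  rewrite /sem_cov mxE; apply: eq_bigr => k _.
  by rewrite mul_mx_diag !mxE.
rewrite /pop_mse.
under eq_bigr do under eq_bigr do rewrite e mulr_sumr mulr_suml.
under eq_bigr do rewrite exchange_big.
rewrite exchange_big; apply: eq_bigr => k _.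
rewrite expr2 mulr_suml mulr_sumr; apply: eq_bigr => i _.
rewrite mulr_sumr mulr_sumr; apply: eq_bigr => j _.
ring.
Qed.

Lemma acoef_gen {R : fieldType} {p : nat} (M : 'M[R]_p) u (c : 'I_p -> R) k :
  \sum_i ((i == u)%:R - c i) * M i k = M u k - \sum_i c i * M i k.
Proof.
under eq_bigr do rewrite mulrBl.
rewrite sumrB (bigD1 u) //= eqxx mul1r big1 ?addr0 // => i /negbTE ->.
by rewrite mul0r.
Qed.

Lemma sum_prime {R : fieldType} {p : nat} {E : rel 'I_p} {B : 'M[R]_p} {theta : {perm 'I_p}} :
  acyclic E -> (forall v' w, ~~ E w v' -> B v' w = 0) -> causal_ordering E theta ->
  forall v k (c : 'I_p -> R), k != v ->
  \sum_i c i * invmx (1%:M - B) i k =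
  \sum_i (if i == v then 0 else c i + c v * B v i) * invmx (1%:M - B) i k.
Proof.
move=> acE Bs cth v k c kv.
have Bvv : B v v = 0.
  have [//|nz] := eqVneq (B v v) 0.
  by have [_ lt] := B_lt acE Bs cth _ _ nz; rewrite ltnn in lt.
rewrite (bigD1 v) //= [RHS](bigD1 v) //= eqxx mul0r add0r.
rewrite (M_eq acE Bs cth) eq_sym (negbTE kv) add0r (bigD1 v) //= Bvv mul0r add0r.
rewrite mulr_sumr -big_split /=; apply: eq_bigr => i /negbTE ->.
ring.
Qed.

Lemma LA_valid {R : realFieldType} {p : nat} {E : rel 'I_p} {B : 'M[R]_p} {theta : {perm 'I_p}} :
  acyclic E -> (forall v' w, ~~ E w v' -> B v' w = 0) -> causal_ordering E theta ->
  forall (dvar : 'I_p -> R) u v, (forall j, 0 < dvar j) -> (theta v < theta u)%N ->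
  valid_adjustment B dvar u v (pr theta v).
Proof.
move=> acE Bs cth dvar u v dpos _.
set M := invmx (1%:M - B).
split; first by rewrite /pr inE ltnn.
move=> b [bsupp bmin].
have av (c : 'I_p -> R) : (forall w, w \notin v |: pr theta v -> c w = 0) ->
    \sum_i ((i == u)%:R - c i) * M i v = M u v - c v.
  move=> cs; rewrite acoef_gen; congr (_ - _).
  rewrite (bigD1 v) //= (M_diag acE Bs cth) mulr1 big1 ?addr0 // => i iv.
  have [->|ci] := eqVneq (c i) 0; first by rewrite mul0r.
  have iT : i \in v |: pr theta v by apply: contraNT ci => /cs ->; rewrite eqxx.
  move: iT; rewrite !inE (negbTE iv) /= => lt.
  have [->|nz] := eqVneq (M i v) 0; first by rewrite mulr0.
  by move: (cth _ _ lt); rewrite /ancestor (M_supp acE Bs cth _ _ nz).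
rewrite /total_effect -/M; have [//|neq] := eqVneq (b v) (M u v); exfalso.
pose ct i := if i == v then M u v else b i + (b v - M u v) * B v i.
have ctsupp w : w \notin v |: pr theta v -> ct w = 0.
  rewrite !inE negb_or => /andP[wv wn]; rewrite /ct (negbTE wv) bsupp ?inE ?negb_or ?wv //.
  have [->|nz] := eqVneq (B v w) 0; first by rewrite mulr0 addr0.
  by have [_ lt] := B_lt acE Bs cth _ _ nz; rewrite lt in wn.
have := bmin ct ctsupp; rewrite !mse_eq -/M.
rewrite (bigD1 v) //= [X in _ <= X](bigD1 v) //= (av _ ctsupp) (av _ bsupp).
have -> : \sum_(k | k != v) dvar k * (\sum_i ((i == u)%:R - ct i) * M i k) ^+ 2 =
          \sum_(k | k != v) dvar k * (\sum_i ((i == u)%:R - b i) * M i k) ^+ 2.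
  apply: eq_bigr => k kv; rewrite !acoef_gen.
  rewrite (sum_prime acE Bs cth v k ct kv) (sum_prime acE Bs cth v k b kv).
  do 3 f_equal; apply/eqP; rewrite eqr_opp; apply/eqP; apply: eq_bigr => i _; case: eqP => // /eqP iv.
  by rewrite /ct eqxx (negbTE iv); ring.
rewrite /ct eqxx subrr expr0n /= mulr0 add0r.
set S1 := \sum_(k < p | k != v) _.
rewrite -[X in _ <= X]add0r lerD2r.
have d0 : M u v - b v != 0 by rewrite subr_eq0 eq_sym.
have : 0 < dvar v * (M u v - b v) ^+ 2.
  apply: mulr_gt0 => //; rewrite lt_def sqr_ge0 andbT expf_neq0 //.
by move=> h1 h2; have := lt_le_trans h1 h2; rewrite ltxx.
Qed.

Local Open Scope classical_set_scope.

Theorem lemma1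
  (R : realType) (d : measure_display) (Omega : measurableType d)
  (P : probability Omega R)
  (p : nat) (E : rel 'I_p) (B : 'M[R]_p) (dvar : 'I_p -> R)
  (eps : nat -> Omega -> 'cV[R]_p) (Ys : nat -> Omega -> 'cV[R]_p)
  (Thetahat : forall n : nat, ('I_n -> 'cV[R]_p) -> {set {perm 'I_p}})
  (C : forall n : nat, {set 'I_p} -> ('I_n -> 'cV[R]_p) -> set R)
  (u v : 'I_p) (alpha : R) :
  (* G is a DAG and B is supported on its edges *)
  acyclic E ->
  (forall v' w, ~~ E w v' -> B v' w = 0) ->
  (* the sample: Ys i (i = 0, 1, ...) are i.i.d. copies of Y following the
     linear SEM Y = B Y + eps with mutually independent mean-zero errors *)
  (forall i omega, Ys i omega = B *m Ys i omega + eps i omega) ->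
  mutually_independent P (fun ij : nat * 'I_p => fun omega => eps ij.1 omega ij.2 ord0) ->
  (forall i j (A : set R), measurable A ->
     P ((fun omega => eps i omega j ord0) @^-1` A) =
     P ((fun omega => eps 0%N omega j ord0) @^-1` A)) ->
  (forall i j, ('E_P[fun omega => eps i omega j ord0] = 0)%E) ->
  (forall j, 0 < dvar j) ->
  (forall i j, 'V_P[fun omega => eps i omega j ord0] = (dvar j)%:E) ->
  u != v ->
  0 < alpha < 1 ->
  (* measurability of the data-dependent events *)
  (forall n theta,
     measurable [set omega | theta \in Thetahat n (fun i : 'I_n => Ys i omega)]) ->
  (forall n S x,
     measurable [set omega | C n S (fun i : 'I_n => Ys i omega) x]) ->
  (* asymptotic coverage of the causal orderings *)
  (forall theta, causal_ordering E theta ->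
     ((1 - alpha / 2)%:E <=
      limn_einf (fun n => P [set omega |
        theta \in Thetahat n (fun i : 'I_n => Ys i omega)]))%E) ->
  (* asymptotic coverage of C(S) for valid adjustment sets S *)
  (forall S : {set 'I_p}, S \subset ~: [set u; v] ->
     valid_adjustment B dvar u v S ->
     ((1 - alpha / 2)%:E <=
      limn_einf (fun n => P [set omega |
        C n S (fun i : 'I_n => Ys i omega) (total_effect B u v)]))%E) ->
  (* conclusion: asymptotic coverage of hat C_alpha *)
  ((1 - alpha)%:E <=
   limn_einf (fun n => P [set omega |
     let Th := Thetahat n (fun i : 'I_n => Ys i omega) in
     let Chat : set R :=
       [set x | (exists2 theta, theta \in Th & (theta v < theta u)%N /\
                   C n (pr theta v) (fun i : 'I_n => Ys i omega) x)
                \/ ((exists2 theta, theta \in Th & (theta u < theta v)%N)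
                    /\ x = 0%R)] in
     Chat (total_effect B u v)]))%E.
Proof.
move=> acE Bsupp _ _ _ _ dvar_pos _ uv /andP[a0 a1] mTh mC HTh HC.
have [th0 cth0] := exists_causal acE.
set pi := total_effect B u v.
set Ys' := fun n (omega : Omega) => (fun i : 'I_n => Ys i omega).
set Chat := fun n => [set omega : Omega |
     let Th := Thetahat n (fun i : 'I_n => Ys i omega) in
     let Chat : set R :=
       [set x | (exists2 theta, theta \in Th & (theta v < theta u)%N /\
                   C n (pr theta v) (fun i : 'I_n => Ys i omega) x)
                \/ ((exists2 theta, theta \in Th & (theta u < theta v)%N)
                    /\ x = 0%R)] in
     Chat pi].
change ((1 - alpha)%:E <= limn_einf (fun n => P (Chat n)))%E.
set Ev1 := fun n => [set omega : Omega | th0 \in Thetahat n (fun i : 'I_n => Ys i omega)].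
have mEv1 n : measurable (Ev1 n) by apply: mTh.
have mChat n : measurable (Chat n).
  have -> : Chat n = (\bigcup_(th in [set th : {perm 'I_p} | (th v < th u)%N])
      ([set omega | th \in Thetahat n (fun i : 'I_n => Ys i omega)] `&`
       [set omega | C n (pr th v) (fun i : 'I_n => Ys i omega) pi])) `|`
      ((\bigcup_(th in [set th : {perm 'I_p} | (th u < th v)%N])
        [set omega | th \in Thetahat n (fun i : 'I_n => Ys i omega)]) `&`
       [set _ : Omega | pi = 0]).
    apply/seteqP; split => omega /=.
      case=> [[th thin [thlt Cth]]|[[th thin thlt] pi0]].
        by left; exists th.
      by right; split => //; exists th.
    case=> [[th /= thlt [thin Cth]]|[[th /= thlt thin] pi0]].
      by left; exists th.
    by right; split => //; exists th.
  apply: measurableU.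
    apply: fin_bigcup_measurable; first exact: finite_finset.
    by move=> th _; apply: measurableI; [apply: mTh|apply: mC].
  apply: measurableI.
    apply: fin_bigcup_measurable; [exact: finite_finset|] => th _; exact: mTh.
  have [pi0|pi0] := eqVneq pi 0.
    have -> : [set _ : Omega | pi = 0] = setT by apply/seteqP; split.
    exact: measurableT.
  have -> : [set _ : Omega | pi = 0] = set0.
    by apply/seteqP; split => // omega /= /eqP; rewrite (negbTE pi0).
  exact: measurable0.
have [lt1|lt2] : (th0 u < th0 v)%N \/ (th0 v < th0 u)%N.
  case: (ltngtP (th0 u) (th0 v)) => h; [by left|by right|].
  by move/val_inj/perm_inj: h => h; rewrite h eqxx in uv.
- have pi0 : pi = 0 by apply: (LA_zero acE Bsupp cth0); exact: cth0 _ _ lt1.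
  have h1 : ((1 - alpha)%:E <= (1 - alpha/2)%:E)%E by rewrite lee_fin; lra.
  apply: le_trans h1 _; apply: le_trans (HTh th0 cth0) _; apply: le_liminf => n.
  apply: le_measure; rewrite ?inE //.
  by move=> omega /= thin; right; split => //; exists th0.
set S := pr th0 v.
have subS : S \subset ~: [set u; v].
  apply/fintype.subsetP => w; rewrite /S /pr !finset.inE => hw.
  apply/norP; split; apply/eqP => e; subst w.
    by move: (ltn_trans hw lt2); rewrite ltnn.
  by move: hw; rewrite ltnn.
have H2 := HC S subS (LA_valid acE Bsupp cth0 dvar u v dvar_pos lt2).
set Ev2 := fun n => [set omega : Omega | C n S (fun i : 'I_n => Ys i omega) pi].
have mEv2 n : measurable (Ev2 n) by apply: mC.
have key := liminf_super (fun n => P (Ev1 n)) (fun n => P (Ev2 n))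
  (fun n => P (Chat n)).
have r01 A : measurable A -> (0 <= P A <= 1)%E.
  by move=> mA; rewrite measure_ge0 probability_le1.
have := key (fun n => r01 _ (mEv1 n)) (fun n => r01 _ (mEv2 n)) (fun n => r01 _ (mChat n)).
have step n : (P (Ev1 n) + P (Ev2 n) <= 1 + P (Chat n))%E.
  rewrite (measureDI P (mEv2 n) (mEv1 n)) addeA; apply: leeD.
    rewrite -measureU //; first (apply: probability_le1; apply: measurableU => //; exact: measurableD).
    - exact: measurableD.
    - by apply/seteqP; split => x //= [h1 [_ h2]].
  apply: le_measure; rewrite ?inE //; first exact: measurableI.
  by move=> omega /= [h2 h1]; left; exists th0 => //; split.
move=> /(_ step) key2.
have := le_trans (leeD (HTh th0 cth0) H2) key2.
move: (limn_einf (fun n => P (Chat n))) => L.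
case: L => [r| |] //=.
- by rewrite -!EFinD !lee_fin; lra.
- by move=> _; rewrite leey.
Qed.
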